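(* For all formulas $A,B$ of bilattice logic, if $A\vdash B$ is derivable in BL, then the sequent $t_1(A)\vdash t_1(B)$ is derivable in D.BL; and for all formulas $A,B$ of bilattice logic with conflation, if $A\vdash B$ is derivable in CBL, then $t_1(A)\vdash t_1(B)$ is derivable in D.CBL.
   Context: Bilattice logic BL. Formulas over countably many atoms: $A::=p\mid \mathtt{t}\mid\mathtt{f}\mid\top\mid\bot\mid\neg A\mid A\wedge A\mid A\vee A\mid A\otimes A\mid A\oplus A$ (for CBL also $-A$). BL derives sequents $A\vdash B$ from the axioms $A\vdash A$; $\neg\neg A\vdash A$ and $A\vdash\neg\neg A$; $\mathtt{f}\vdash A$; $A\vdash\mathtt{t}$; $\bot\vdash A$; $A\vdash\top$; $A\vdash\neg\mathtt{f}$; $\neg\mathtt{t}\vdash A$; $\neg\bot\vdash A$; $A\vdash\neg\top$; $A\wedge B\vdash A$; $A\wedge B\vdash B$; $A\vdash A\vee B$; $B\vdash A\vee B$; $A\otimes B\vdash A$; $A\otimes B\vdash B$; $A\vdash A\oplus B$; $B\vdash A\oplus B$; $A\wedge(B\vee C)\vdash(A\wedge B)\vee(A\wedge C)$; $A\otimes(B\oplus C)\vdash(A\otimes B)\vee(A\oplus C)$; and both directions of $\neg(A\wedge B)\dashv\vdash\neg A\vee\neg B$, $\neg(A\vee B)\dashv\vdash\neg A\wedge\neg B$, $\neg(A\otimes B)\dashv\vdash\neg A\otimes\neg B$, $\neg(A\oplus B)\dashv\vdash\neg A\oplus\neg B$; using the rules: from $A\vdash B$ and $B\vdash C$ infer $A\vdash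 C$; from $A\vdash B$ and $A\vdash C$ infer $A\vdash B\wedge C$ and $A\vdash B\otimes C$; from $A\vdash B$ and $C\vdash B$ infer $A\vee C\vdash B$ and $A\oplus C\vdash B$. CBL is BL plus the axioms (both directions where $\dashv\vdash$) $--A\dashv\vdash A$, $-\neg A\dashv\vdash\neg-A$, $-\mathtt{f}\vdash A$, $A\vdash-\mathtt{t}$, $-\top\vdash A$, $A\vdash-\bot$, $-(A\wedge B)\dashv\vdash-A\wedge-B$, $-(A\vee B)\dashv\vdash-A\vee-B$, $-(A\otimes B)\dashv\vdash-A\oplus-B$, $-(A\oplus B)\dashv\vdash-A\otimes-B$. Translation: $t_1,t_2$ map BL/CBL formulas to type-1/type-2 formulas of D.BL/D.CBL: $t_1(p)=p_1$, $t_2(p)=p_2$; $t_1(\mathtt{t})=1_1,t_2(\mathtt{t})=0_2$; $t_1(\mathtt{f})=0_1,t_2(\mathtt{f})=1_2$; $t_1(\top)=1_1,t_2(\top)=1_2$; $t_1(\bot)=0_1,t_2(\bot)=0_2$; $t_1(A\wedge B)=t_1A\sqcap_1t_1B$, $t_2(A\wedge B)=t_2A\sqcup_2t_2B$; $t_1(A\vee B)=t_1A\sqcup_1t_1B$, $t_2(A\vee B)=t_2A\sqcap_2t_2B$; $t_1(A\otimes B)=t_1A\sqcap_1t_1B$, $t_2(A\otimes B)=t_2A\sqcap_2t_2B$; $t_1(A\oplus B)=t_1A\sqcup_1t_1B$, $t_2(A\oplus B)=t_2A\sqcup_2t_2B$; $t_1(\neg A)=\mathrm{p}\,t_2(A)$,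 $t_2(\neg A)=\mathrm{n}\,t_1(A)$; $t_1(-A)=\mathrm{p}{\sim}_2t_2(A)$, $t_2(-A)=\mathrm{n}{\sim}_1t_1(A)$. Calculus D.BL. Two types $1,2$; type-$i$ atoms $p_i,q_i,\dots$. Type-1 formulas: $A_1::=p_1\mid 1_1\mid 0_1\mid \mathrm{p}A_2\mid A_1\sqcap_1A_1\mid A_1\sqcup_1A_1$; type-2 formulas: $A_2::=p_2\mid 1_2\mid 0_2\mid \mathrm{n}A_1\mid A_2\sqcap_2A_2\mid A_2\sqcup_2A_2$. Type-1 structures: $X_1::=A_1\mid \hat1_1\mid\check0_1\mid \mathrm{P}X_2\mid X_1\hat\sqcap_1X_1\mid X_1\check\sqcup_1X_1\mid X_1\check\sqsupset_1X_1\mid X_1\hat\sqsubset_1X_1$; type-2 structures analogously with index 2 and $\mathrm{N}X_1$ instead of $\mathrm{P}X_2$. Sequents $X_i\vdash Y_i$ have both sides of the same type. Rules (for $i\in\{1,2\}$; ''$\Leftrightarrow$'' = both directions): Display: $X\hat\sqcap_iY\vdash Z\Leftrightarrow X\vdash Y\check\sqsupset_iZ$; $X\vdash Y\check\sqcup_iZ\Leftrightarrow X\hat\sqsubset_iY\vdash Z$; $\mathrm{P}X_2\vdash Y_1\Leftrightarrow X_2\vdash \mathrm{N}Y_1$; $\mathrm{N}X_1\vdash Y_2\Leftrightarrow X_1\vdash\mathrm{P}Y_2$. Identity $p_i\vdash p_i$; Cut: from $X\vdash A$ and $A\vdash Y$ infer $X\vdash Y$. Structural: from $X\hat\sqcap_i\hat1_i\vdash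 Y$ infer $X\vdash Y$; from $X\vdash Y\check\sqcup_i\check0_i$ infer $X\vdash Y$; exchange (from $X\hat\sqcap_iY\vdash Z$ infer $Y\hat\sqcap_iX\vdash Z$; from $X\vdash Y\check\sqcup_iZ$ infer $X\vdash Z\check\sqcup_iY$); associativity (from $(X\hat\sqcap_iY)\hat\sqcap_iZ\vdash W$ infer $X\hat\sqcap_i(Y\hat\sqcap_iZ)\vdash W$; from $X\vdash(Y\check\sqcup_iZ)\check\sqcup_iW$ infer $X\vdash Y\check\sqcup_i(Z\check\sqcup_iW)$); weakening (from $X\vdash Z$ infer $X\hat\sqcap_iY\vdash Z$; from $X\vdash Y$ infer $X\vdash Y\check\sqcup_iZ$); contraction (from $X\hat\sqcap_iX\vdash Z$ infer $X\vdash Z$; from $X\vdash Y\check\sqcup_iY$ infer $X\vdash Y$). Operational: from $\hat1_i\vdash X$ infer $1_i\vdash X$; axiom $\hat1_i\vdash1_i$; axiom $0_i\vdash\check0_i$; from $X\vdash\check0_i$ infer $X\vdash0_i$; from $A\hat\sqcap_iB\vdash X$ infer $A\sqcap_iB\vdash X$; from $X\vdash A$ and $Y\vdash B$ infer $X\hat\sqcap_iY\vdash A\sqcap_iB$; from $A\vdash X$ and $B\vdash Y$ infer $A\sqcup_iB\vdash X\check\sqcup_iY$; from $X\vdash A\check\sqcup_iB$ infer $X\vdash A\sqcup_iB$. Multi-type structural: $X_1\vdash Y_1\Leftrightarrow\mathrm{N}X_1\vdash\mathrm{N}Y_1$; $X_2\vdash Y_2\Leftrightarrow\mathrm{P}X_2\vdash\mathrm{P}Y_2$;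 from $\check0_1\vdash X_1$ infer $\mathrm{P}\check0_2\vdash X_1$; from $X_1\vdash\hat1_1$ infer $X_1\vdash\mathrm{P}\hat1_2$. Multi-type operational: from $\mathrm{N}A_1\vdash X_2$ infer $\mathrm{n}A_1\vdash X_2$; from $X_2\vdash\mathrm{N}A_1$ infer $X_2\vdash\mathrm{n}A_1$; from $\mathrm{P}A_2\vdash X_1$ infer $\mathrm{p}A_2\vdash X_1$; from $X_1\vdash\mathrm{P}A_2$ infer $X_1\vdash\mathrm{p}A_2$. D.CBL adds formulas ${\sim}_iA_i$, structures $\ast_iX_i$, and rules: $\ast_iX\vdash Y\Leftrightarrow\ast_iY\vdash X$; $X\vdash\ast_iY\Leftrightarrow Y\vdash\ast_iX$; $X\vdash Y\Leftrightarrow\ast_iY\vdash\ast_iX$; from $\mathrm{N}\ast_1X_1\vdash Y_2$ infer $\ast_2\mathrm{N}X_1\vdash Y_2$; from $X_2\vdash\mathrm{N}\ast_1Y_1$ infer $X_2\vdash\ast_2\mathrm{N}Y_1$; from $\ast_iA\vdash Y$ infer ${\sim}_iA\vdash Y$; from $X\vdash\ast_iA$ infer $X\vdash{\sim}_iA$. A formula is regarded as a structure. *)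

(* Defs.v *)
Set Implicit Arguments.

(* Source logics BL / CBL.  The flag [c] says whether conflation [-] is    *)
(* available: [bform false] = BL formulas, [bform true] = CBL formulas.    *)
Inductive bform (c : bool) : Type :=
| BAt : nat -> bform c
| Bt : bform c
| Bf : bform c
| Btop : bform c
| Bbot : bform c
| BNeg : bform c -> bform c
| BAnd : bform c -> bform c -> bform c
| BOr : bform c -> bform c -> bform c
| BOtimes : bform c -> bform c -> bform c
| BOplus : bform c -> bform c -> bform c
| BConf : c = true -> bform c -> bform c.

Arguments BAt {c}. Arguments Bt {c}. Arguments Bf {c}. Arguments Btop {c}.
Arguments Bbot {c}. Arguments BNeg {c}. Arguments BAnd {c}. Arguments BOr {c}.
Arguments BOtimes {c}. Arguments BOplus {c}. Arguments BConf {c}.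

Inductive bder {c : bool} : bform c -> bform c -> Prop :=
| b_id A : bder A A
| b_nn1 A : bder (BNeg (BNeg A)) A
| b_nn2 A : bder A (BNeg (BNeg A))
| b_f A : bder Bf A
| b_t A : bder A Bt
| b_bot A : bder Bbot A
| b_top A : bder A Btop
| b_negf A : bder A (BNeg Bf)
| b_negt A : bder (BNeg Bt) A
| b_negbot A : bder (BNeg Bbot) A
| b_negtop A : bder A (BNeg Btop)
| b_and1 A B : bder (BAnd A B) A
| b_and2 A B : bder (BAnd A B) B
| b_or1 A B : bder A (BOr A B)
| b_or2 A B : bder B (BOr A B)
| b_ot1 A B : bder (BOtimes A B) A
| b_ot2 A B : bder (BOtimes A B) B
| b_op1 A B : bder A (BOplus A B)
| b_op2 A B : bder B (BOplus A B)
| b_dist1 A B C : bder (BAnd A (BOr B C)) (BOr (BAnd A B) (BAnd A C))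
| b_dist2 A B C : bder (BOtimes A (BOplus B C)) (BOr (BOtimes A B) (BOplus A C))
| b_negand1 A B : bder (BNeg (BAnd A B)) (BOr (BNeg A) (BNeg B))
| b_negand2 A B : bder (BOr (BNeg A) (BNeg B)) (BNeg (BAnd A B))
| b_negor1 A B : bder (BNeg (BOr A B)) (BAnd (BNeg A) (BNeg B))
| b_negor2 A B : bder (BAnd (BNeg A) (BNeg B)) (BNeg (BOr A B))
| b_negot1 A B : bder (BNeg (BOtimes A B)) (BOtimes (BNeg A) (BNeg B))
| b_negot2 A B : bder (BOtimes (BNeg A) (BNeg B)) (BNeg (BOtimes A B))
| b_negop1 A B : bder (BNeg (BOplus A B)) (BOplus (BNeg A) (BNeg B))
| b_negop2 A B : bder (BOplus (BNeg A) (BNeg B)) (BNeg (BOplus A B))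
| b_cut A B C : bder A B -> bder B C -> bder A C
| b_andR A B C : bder A B -> bder A C -> bder A (BAnd B C)
| b_otR A B C : bder A B -> bder A C -> bder A (BOtimes B C)
| b_orL A B C : bder A B -> bder C B -> bder (BOr A C) B
| b_opL A B C : bder A B -> bder C B -> bder (BOplus A C) B
| c_cc1 (h : c = true) A : bder (BConf h (BConf h A)) A
| c_cc2 (h : c = true) A : bder A (BConf h (BConf h A))
| c_cn1 (h : c = true) A : bder (BConf h (BNeg A)) (BNeg (BConf h A))
| c_cn2 (h : c = true) A : bder (BNeg (BConf h A)) (BConf h (BNeg A))
| c_f (h : c = true) A : bder (BConf h Bf) A
| c_t (h : c = true) A : bder A (BConf h Bt)
| c_top (h : c = true) A : bder (BConf h Btop) A
| c_bot (h : c = true) A : bder A (BConf h Bbot)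
| c_and1 (h : c = true) A B : bder (BConf h (BAnd A B)) (BAnd (BConf h A) (BConf h B))
| c_and2 (h : c = true) A B : bder (BAnd (BConf h A) (BConf h B)) (BConf h (BAnd A B))
| c_or1 (h : c = true) A B : bder (BConf h (BOr A B)) (BOr (BConf h A) (BConf h B))
| c_or2 (h : c = true) A B : bder (BOr (BConf h A) (BConf h B)) (BConf h (BOr A B))
| c_ot1 (h : c = true) A B : bder (BConf h (BOtimes A B)) (BOplus (BConf h A) (BConf h B))
| c_ot2 (h : c = true) A B : bder (BOplus (BConf h A) (BConf h B)) (BConf h (BOtimes A B))
| c_op1 (h : c = true) A B : bder (BConf h (BOplus A B)) (BOtimes (BConf h A) (BConf h B))
| c_op2 (h : c = true) A B : bder (BOtimes (BConf h A) (BConf h B)) (BConf h (BOplus A B)).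

(* Multi-type display calculi D.BL ([c = false]) and D.CBL ([c = true]).  *)
Inductive ty : Type := T1 | T2.

Inductive fm (c : bool) : ty -> Type :=
| FAt i : nat -> fm c i
| FOne i : fm c i
| FZero i : fm c i
| Fp : fm c T2 -> fm c T1
| Fn : fm c T1 -> fm c T2
| FMeet i : fm c i -> fm c i -> fm c i
| FJoin i : fm c i -> fm c i -> fm c i
| FNeg i : c = true -> fm c i -> fm c i.

Arguments FAt {c}. Arguments FOne {c}. Arguments FZero {c}. Arguments Fp {c}.
Arguments Fn {c}. Arguments FMeet {c i}. Arguments FJoin {c i}. Arguments FNeg {c i}.

Inductive st (c : bool) : ty -> Type :=
| SF i : fm c i -> st c i
| SOne i : st c i
| SZero i : st c i
| SP : st c T2 -> st c T1
| SN : st c T1 -> st c T2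
| SMeet i : st c i -> st c i -> st c i
| SJoin i : st c i -> st c i -> st c i
| SRImp i : st c i -> st c i -> st c i
| SLImp i : st c i -> st c i -> st c i
| SStar i : c = true -> st c i -> st c i.

Arguments SF {c i}. Arguments SOne {c}. Arguments SZero {c}. Arguments SP {c}.
Arguments SN {c}. Arguments SMeet {c i}. Arguments SJoin {c i}.
Arguments SRImp {c i}. Arguments SLImp {c i}. Arguments SStar {c i}.

Inductive dder {c : bool} : forall {i : ty}, st c i -> st c i -> Prop :=
| d_res1 i (X Y Z : st c i) : dder (SMeet X Y) Z -> dder X (SRImp Y Z)
| d_res2 i (X Y Z : st c i) : dder X (SRImp Y Z) -> dder (SMeet X Y) Z
| d_res3 i (X Y Z : st c i) : dder X (SJoin Y Z) -> dder (SLImp X Y) Z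
| d_res4 i (X Y Z : st c i) : dder (SLImp X Y) Z -> dder X (SJoin Y Z)
| d_PN1 (X : st c T2) (Y : st c T1) : dder (SP X) Y -> dder X (SN Y)
| d_PN2 (X : st c T2) (Y : st c T1) : dder X (SN Y) -> dder (SP X) Y
| d_NP1 (X : st c T1) (Y : st c T2) : dder (SN X) Y -> dder X (SP Y)
| d_NP2 (X : st c T1) (Y : st c T2) : dder X (SP Y) -> dder (SN X) Y
| d_id i n : dder (SF (FAt i n)) (SF (FAt i n))
| d_cut i (X Y : st c i) (A : fm c i) : dder X (SF A) -> dder (SF A) Y -> dder X Y
| d_oneE i (X Y : st c i) : dder (SMeet X (SOne i)) Y -> dder X Y
| d_zeroE i (X Y : st c i) : dder X (SJoin Y (SZero i)) -> dder X Y
| d_exL i (X Y Z : st c i) : dder (SMeet X Y) Z -> dder (SMeet Y X) Z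
| d_exR i (X Y Z : st c i) : dder X (SJoin Y Z) -> dder X (SJoin Z Y)
| d_asL i (X Y Z W : st c i) : dder (SMeet (SMeet X Y) Z) W -> dder (SMeet X (SMeet Y Z)) W
| d_asR i (X Y Z W : st c i) : dder X (SJoin (SJoin Y Z) W) -> dder X (SJoin Y (SJoin Z W))
| d_wL i (X Y Z : st c i) : dder X Z -> dder (SMeet X Y) Z
| d_wR i (X Y Z : st c i) : dder X Y -> dder X (SJoin Y Z)
| d_cL i (X Z : st c i) : dder (SMeet X X) Z -> dder X Z
| d_cR i (X Y : st c i) : dder X (SJoin Y Y) -> dder X Y
| d_oneL i (X : st c i) : dder (SOne i) X -> dder (SF (FOne i)) X
| d_oneR i : dder (SOne i) (SF (FOne i))
| d_zeroL i : dder (SF (FZero i)) (SZero i)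
| d_zeroR i (X : st c i) : dder X (SZero i) -> dder X (SF (FZero i))
| d_meetL i (A B : fm c i) (X : st c i) :
    dder (SMeet (SF A) (SF B)) X -> dder (SF (FMeet A B)) X
| d_meetR i (X Y : st c i) (A B : fm c i) :
    dder X (SF A) -> dder Y (SF B) -> dder (SMeet X Y) (SF (FMeet A B))
| d_joinL i (A B : fm c i) (X Y : st c i) :
    dder (SF A) X -> dder (SF B) Y -> dder (SF (FJoin A B)) (SJoin X Y)
| d_joinR i (X : st c i) (A B : fm c i) :
    dder X (SJoin (SF A) (SF B)) -> dder X (SF (FJoin A B))
| d_N1 (X Y : st c T1) : dder X Y -> dder (SN X) (SN Y)
| d_N2 (X Y : st c T1) : dder (SN X) (SN Y) -> dder X Y
| d_P1 (X Y : st c T2) : dder X Y -> dder (SP X) (SP Y)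
| d_P2 (X Y : st c T2) : dder (SP X) (SP Y) -> dder X Y
| d_Pzero (X : st c T1) : dder (SZero T1) X -> dder (SP (SZero T2)) X
| d_Pone (X : st c T1) : dder X (SOne T1) -> dder X (SP (SOne T2))
| d_nL (A : fm c T1) (X : st c T2) : dder (SN (SF A)) X -> dder (SF (Fn A)) X
| d_nR (X : st c T2) (A : fm c T1) : dder X (SN (SF A)) -> dder X (SF (Fn A))
| d_pL (A : fm c T2) (X : st c T1) : dder (SP (SF A)) X -> dder (SF (Fp A)) X
| d_pR (X : st c T1) (A : fm c T2) : dder X (SP (SF A)) -> dder X (SF (Fp A))
| d_st1 (h : c = true) i (X Y : st c i) : dder (SStar h X) Y -> dder (SStar h Y) X
| d_st2 (h : c = true) i (X Y : st c i) : dder X (SStar h Y) -> dder Y (SStar h X)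
| d_st3 (h : c = true) i (X Y : st c i) : dder X Y -> dder (SStar h Y) (SStar h X)
| d_st4 (h : c = true) i (X Y : st c i) : dder (SStar h Y) (SStar h X) -> dder X Y
| d_stNL (h : c = true) (X : st c T1) (Y : st c T2) :
    dder (SN (SStar h X)) Y -> dder (SStar h (SN X)) Y
| d_stNR (h : c = true) (X : st c T2) (Y : st c T1) :
    dder X (SN (SStar h Y)) -> dder X (SStar h (SN Y))
| d_negL (h : c = true) i (A : fm c i) (Y : st c i) :
    dder (SStar h (SF A)) Y -> dder (SF (FNeg h A)) Y
| d_negR (h : c = true) i (X : st c i) (A : fm c i) :
    dder X (SStar h (SF A)) -> dder X (SF (FNeg h A)).

Fixpoint t1 {c : bool} (A : bform c) : fm c T1 :=
  match A with
  | BAt n => FAt T1 n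
  | Bt => FOne T1
  | Bf => FZero T1
  | Btop => FOne T1
  | Bbot => FZero T1
  | BAnd A B => FMeet (t1 A) (t1 B)
  | BOr A B => FJoin (t1 A) (t1 B)
  | BOtimes A B => FMeet (t1 A) (t1 B)
  | BOplus A B => FJoin (t1 A) (t1 B)
  | BNeg A => Fp (t2 A)
  | BConf h A => Fp (FNeg h (t2 A))
  end
with t2 {c : bool} (A : bform c) : fm c T2 :=
  match A with
  | BAt n => FAt T2 n
  | Bt => FZero T2
  | Bf => FOne T2
  | Btop => FOne T2
  | Bbot => FZero T2
  | BAnd A B => FJoin (t2 A) (t2 B)
  | BOr A B => FMeet (t2 A) (t2 B)
  | BOtimes A B => FMeet (t2 A) (t2 B)
  | BOplus A B => FJoin (t2 A) (t2 B)
  | BNeg A => Fn (t1 A)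
  | BConf h A => Fn (FNeg h (t1 A))
  end.

(* Main.v *)
Require Import Defs.

Lemma idf {c : bool} {i : ty} (a : fm c i) : dder (SF a) (SF a).
Proof.
  induction a.
  - apply d_id.
  - apply d_oneL; apply d_oneR.
  - apply d_zeroR; apply d_zeroL.
  - apply d_pL; apply d_pR; apply d_P1; exact IHa.
  - apply d_nL; apply d_nR; apply d_N1; exact IHa.
  - apply d_meetL; apply d_meetR; assumption.
  - apply d_joinR; apply d_joinL; assumption.
  - apply d_negL; apply d_negR; apply d_st3; exact IHa.
Qed.

Section L.
Context {c : bool}.

Lemma cutf {i} (X Y : st c i) a : dder X (SF a) -> dder (SF a) Y -> dder X Y.
Proof. intros; eapply d_cut; eauto. Qed.

Lemma meetR' {i} (X : st c i) a b : dder X (SF a) -> dder X (SF b) -> dder X (SF (FMeet a b)).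
Proof. intros; apply d_cL; apply d_meetR; auto. Qed.
Lemma meetL1 {i} (a b : fm c i) : dder (SF (FMeet a b)) (SF a).
Proof. apply d_meetL; apply d_wL; apply idf. Qed.
Lemma meetL2 {i} (a b : fm c i) : dder (SF (FMeet a b)) (SF b).
Proof. apply d_meetL; apply d_exL; apply d_wL; apply idf. Qed.
Lemma joinL' {i} (Y : st c i) a b : dder (SF a) Y -> dder (SF b) Y -> dder (SF (FJoin a b)) Y.
Proof. intros; apply d_cR; apply d_joinL; auto. Qed.
Lemma joinR1 {i} (a b : fm c i) : dder (SF a) (SF (FJoin a b)).
Proof. apply d_joinR; apply d_wR; apply idf. Qed.
Lemma joinR2 {i} (a b : fm c i) : dder (SF b) (SF (FJoin a b)).
Proof. apply d_joinR; apply d_exR; apply d_wR; apply idf. Qed.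
Lemma oneR_any {i} (X : st c i) : dder X (SF (FOne i)).
Proof. apply d_oneE; apply d_exL; apply d_wL; apply d_oneR. Qed.
Lemma zeroL_any {i} (Y : st c i) : dder (SF (FZero i)) Y.
Proof. apply d_zeroE; apply d_exR; apply d_wR; apply d_zeroL. Qed.

Lemma pmono (a b : fm c T2) : dder (SF a) (SF b) -> dder (SF (Fp a)) (SF (Fp b)).
Proof. intros; apply d_pL; apply d_pR; apply d_P1; auto. Qed.
Lemma P_p (a : fm c T2) : dder (SP (SF a)) (SF (Fp a)).
Proof. apply d_pR; apply d_P1; apply idf. Qed.
Lemma p_P (a : fm c T2) : dder (SF (Fp a)) (SP (SF a)).
Proof. apply d_pL; apply d_P1; apply idf. Qed.
Lemma pn_elim (a : fm c T1) : dder (SF (Fp (Fn a))) (SF a).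
Proof. apply d_pL; apply d_PN2; apply d_nL; apply d_N1; apply idf. Qed.
Lemma pn_intro (a : fm c T1) : dder (SF a) (SF (Fp (Fn a))).
Proof. apply d_pR; apply d_NP1; apply d_nR; apply d_N1; apply idf. Qed.
Lemma p_meet (a b : fm c T2) : dder (SF (FMeet (Fp a) (Fp b))) (SF (Fp (FMeet a b))).
Proof.
  apply d_pR; apply d_NP1; apply d_cL; apply d_meetR; apply d_NP2.
  - eapply cutf; [apply meetL1|apply p_P].
  - eapply cutf; [apply meetL2|apply p_P].
Qed.
Lemma p_join (a b : fm c T2) : dder (SF (Fp (FJoin a b))) (SF (FJoin (Fp a) (Fp b))).
Proof.
  apply d_pL; apply d_PN2; apply d_cR; apply d_joinL; apply d_PN1.
  - eapply cutf; [apply P_p|apply joinR1].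
  - eapply cutf; [apply P_p|apply joinR2].
Qed.
Lemma distr {i} (a b d : fm c i) :
  dder (SF (FMeet a (FJoin b d))) (SF (FJoin (FMeet a b) (FMeet a d))).
Proof.
  apply d_joinR; apply d_meetL; apply d_exL; apply d_res2; apply d_cR; apply d_joinL;
  apply d_res1; apply d_exL.
  - apply d_wR; apply d_meetR; apply idf.
  - apply d_exR; apply d_wR; apply d_meetR; apply idf.
Qed.

Section N.
Variable h : c = true.
Lemma negstar {i} (a : fm c i) : dder (SF (FNeg h a)) (SStar h (SF a)).
Proof. apply d_negL; apply d_st3; apply idf. Qed.
Lemma starneg {i} (a : fm c i) : dder (SStar h (SF a)) (SF (FNeg h a)).
Proof. apply d_negR; apply d_st3; apply idf. Qed.
Lemma negAnti {i} (a b : fm c i) : dder (SF a) (SF b) -> dder (SF (FNeg h b)) (SF (FNeg h a)).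
Proof. intros; apply d_negL; apply d_negR; apply d_st3; auto. Qed.
Lemma nn_elim {i} (a : fm c i) : dder (SF (FNeg h (FNeg h a))) (SF a).
Proof. apply d_negL; apply d_st1; apply starneg. Qed.
Lemma nn_intro {i} (a : fm c i) : dder (SF a) (SF (FNeg h (FNeg h a))).
Proof. apply d_negR; apply d_st2; apply negstar. Qed.
Lemma neg_meet {i} (a b : fm c i) :
  dder (SF (FNeg h (FMeet a b))) (SF (FJoin (FNeg h a) (FNeg h b))).
Proof.
  eapply cutf; [apply negAnti|apply nn_elim].
  apply meetR'.
  - eapply cutf; [apply negAnti, joinR1|apply nn_elim].
  - eapply cutf; [apply negAnti, joinR2|apply nn_elim].
Qed.
Lemma neg_join {i} (a b : fm c i) :
  dder (SF (FMeet (FNeg h a) (FNeg h b))) (SF (FNeg h (FJoin a b))).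
Proof.
  eapply cutf; [apply nn_intro|apply negAnti].
  apply joinL'.
  - eapply cutf; [apply nn_intro|apply negAnti, meetL1].
  - eapply cutf; [apply nn_intro|apply negAnti, meetL2].
Qed.
End N.
End L.

Lemma main {c : bool} (A B : bform c) : bder A B -> dder (SF (t1 A)) (SF (t1 B)).
Proof.
  induction 1; simpl.
  - apply idf.
  - apply pn_elim.
  - apply pn_intro.
  - apply zeroL_any.
  - apply oneR_any.
  - apply zeroL_any.
  - apply oneR_any.
  - apply d_pR; apply d_NP1; apply oneR_any.
  - apply d_pL; apply d_PN2; apply zeroL_any.
  - apply d_pL; apply d_PN2; apply zeroL_any.
  - apply d_pR; apply d_NP1; apply oneR_any.
  - apply meetL1.
  - apply meetL2.
  - apply joinR1.
  - apply joinR2.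
  - apply meetL1.
  - apply meetL2.
  - apply joinR1.
  - apply joinR2.
  - apply distr.
  - eapply cutf; [apply meetL1|]. eapply cutf; [|apply joinR2]. apply joinR1.
  - apply p_join.
  - apply joinL'; apply pmono; [apply joinR1|apply joinR2].
  - apply meetR'; apply pmono; [apply meetL1|apply meetL2].
  - apply p_meet.
  - apply meetR'; apply pmono; [apply meetL1|apply meetL2].
  - apply p_meet.
  - apply p_join.
  - apply joinL'; apply pmono; [apply joinR1|apply joinR2].
  - eapply cutf; eauto.
  - apply meetR'; auto.
  - apply meetR'; auto.
  - apply joinL'; auto.
  - apply joinL'; auto.
  - apply d_pL; apply d_PN2; apply d_negL; apply d_st1; apply d_stNL; apply d_nR;
    apply d_N1; apply starneg.
  - apply d_pR; apply d_NP1; apply d_negR; apply d_st2; apply d_stNR; apply d_nL;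
    apply d_N1; apply negstar.
  - apply pmono. apply d_nR; apply d_negL; apply d_st1; apply d_stNL; apply d_nR;
    apply d_N1; apply d_st1; apply starneg.
  - apply pmono. apply d_negR; apply d_nL; apply d_st2; apply d_stNR; apply d_nL;
    apply d_N1; apply d_st2; apply negstar.
  - apply d_pL; apply d_PN2; apply d_negL; apply d_st1; apply oneR_any.
  - apply d_pR; apply d_NP1; apply d_negR; apply d_st2; apply zeroL_any.
  - apply d_pL; apply d_PN2; apply d_negL; apply d_st1; apply oneR_any.
  - apply d_pR; apply d_NP1; apply d_negR; apply d_st2; apply zeroL_any.
  - apply meetR'; apply pmono, negAnti; [apply joinR1|apply joinR2].
  - eapply cutf; [apply p_meet|]. apply pmono, neg_join.
  - eapply cutf; [apply pmono, neg_meet|]. apply p_join.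
  - apply joinL'; apply pmono, negAnti; [apply meetL1|apply meetL2].
  - eapply cutf; [apply pmono, neg_meet|]. apply p_join.
  - apply joinL'; apply pmono, negAnti; [apply meetL1|apply meetL2].
  - apply meetR'; apply pmono, negAnti; [apply joinR1|apply joinR2].
  - eapply cutf; [apply p_meet|]. apply pmono, neg_join.
Qed.

Theorem proposition2 :
  (forall A B : bform false, bder A B -> dder (SF (t1 A)) (SF (t1 B))) /\
  (forall A B : bform true, bder A B -> dder (SF (t1 A)) (SF (t1 B))).
Proof.
  split; intros; apply main; assumption.
Qed.
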